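(* For every positive integer $n$, as formal power series in $z$ (with coefficients polynomials in $q,t$), \[ \sum_{k \geq 0} \overline{{ n+k-1 \brack k}}_{q,t} z^k q^k = \frac{(-tzq^2;q)_{n-1}}{(zq;q)_{n}}. \]
   Context: An overpartition is a partition (a non-increasing finite sequence of positive integers) in which the last (i.e. smallest-position-last) occurrence of each distinct part size may be overlined. Its weight $|\lambda|$ is the sum of its parts. For integers $a,b$ with $0\le b\le a$, $\overline{{a \brack b}}_{q,t}$ denotes the polynomial $\sum_{\lambda} t^{\#_o(\lambda)} q^{|\lambda|}$, the sum running over all overpartitions $\lambda$ with largest part at most $a-b$ and at most $b$ parts, where $\#_o(\lambda)$ is the number of overlined parts of $\lambda$; for other integer pairs $(a,b)$ it is $0$. Notation: $(x;q)_k=(x)_k=\prod_{j=1}^{k}(1-xq^{j-1})$, with $(x)_0=1$. *)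

(* Defs.v *)
From HB Require Import structures.
From mathcomp Require Import all_boot all_order all_algebra.
Set Implicit Arguments. Unset Strict Implicit. Unset Printing Implicit Defensive.
Import Order.TTheory GRing.Theory Num.Theory.
Local Open Scope ring_scope.

(* Coefficient ring: polynomials in q and t with integer coefficients,
   realised as {poly {poly int}}: q is the outer variable, t the inner one. *)
Definition R := {poly {poly int}}.
Definition q : R := 'X.
Definition t : R := ('X)%:P.

(* An overpartition is encoded as a list of (part, overlined?) pairs,
   listed in non-increasing order of parts. *)
Definition is_overpartition (s : seq (nat * bool)) : bool :=
  [&& sorted geq (map fst s),
      all (fun p => 0 < p.1)%N s &
      [forall i : 'I_(size s),
         (nth (0%N, false) s i).2 ==>
         [forall j : 'I_(size s), (i < j)%N ==>
            ((nth (0%N, false) s j).1 != (nth (0%N, false) s i).1)]]].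

Definition ovp_weight (s : seq (nat * bool)) : nat := sumn (map fst s).
Definition ovp_nover (s : seq (nat * bool)) : nat := count snd s.

Fixpoint words {T : Type} (A : seq T) (k : nat) : seq (seq T) :=
  if k is k'.+1 then [seq x :: w | x <- A, w <- words A k'] else [:: [::]].

Definition ovp_box (m b : nat) : seq (seq (nat * bool)) :=
  undup [seq s <- flatten [seq words [seq (p, o) | p <- iota 1 m, o <- [:: false; true]] k
                          | k <- iota 0 b.+1]
        | is_overpartition s].

Definition ovbin (a b : nat) : R :=
  if (b <= a)%N then
    \sum_(s <- ovp_box (a - b) b) t ^+ ovp_nover s * q ^+ ovp_weight s
  else 0.

(* (c z; q)_k = prod_{j<k} (1 - c q^j z), a polynomial in z over R *)
Definition qpoch (c : R) (k : nat) : {poly R} :=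
  \prod_(j < k) (1 - (c * q ^+ j) *: 'X).

Definition fps := nat -> R.
Definition fps_of_poly (p : {poly R}) : fps := fun k => p`_k.
Definition fps_mul (f g : fps) : fps :=
  fun m => \sum_(i < m.+1) f i * g (m - i)%N.

(* coefficients [b_m; ...; b_0] of the multiplicative inverse of f
   (valid when f 0 is a unit) *)
Fixpoint fps_inv_coefs (f : fps) (m : nat) : seq R :=
  if m is m'.+1 then
    let bs := fps_inv_coefs f m' in
    (- (\sum_(i < m'.+1) f i.+1 * nth 0 bs i) * (f 0%N)^-1) :: bs
  else [:: (f 0%N)^-1].
Definition fps_inv (f : fps) : fps := fun m => head 0 (fps_inv_coefs f m).

(* Main.v *)
Require Import Defs.
From mathcomp Require Import all_boot all_order all_algebra.
From mathcomp Require Import ring.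
Import GRing.Theory.
Local Open Scope ring_scope.

Fixpoint ovp (s : seq (nat * bool)) : bool :=
  if s is x :: s' then
    [&& (0 < x.1)%N, all (fun y => y.1 <= x.1)%N s',
        x.2 ==> all (fun y => y.1 != x.1) s' & ovp s']
  else true.

Lemma forall_iota n (P : nat -> bool) :
  [forall i : 'I_n, P i] = all P (iota 0 n).
Proof.
apply/forallP/allP => H.
- by move=> i; rewrite mem_iota add0n => /andP [_ Hi]; exact: (H (Ordinal Hi)).
- by move=> i; apply: H; rewrite mem_iota add0n ltn_ord.
Qed.

Lemma all_nth_iota (T : Type) (d : T) (P : pred T) s :
  all (fun j => P (nth d s j)) (iota 0 (size s)) = all P s.
Proof. transitivity (all P (mkseq (nth d s) (size s))); last by rewrite mkseq_nth. by rewrite /mkseq all_map. Qed.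

Lemma iota0S n : iota 0 n.+1 = 0%N :: map succn (iota 0 n).
Proof. by rewrite /= (iotaDl 1 0). Qed.

Definition FP (s : seq (nat * bool)) : bool :=
  [forall i : 'I_(size s),
         (nth (0%N, false) s i).2 ==>
         [forall j : 'I_(size s), (i < j)%N ==>
            ((nth (0%N, false) s j).1 != (nth (0%N, false) s i).1)]].

Definition FPs (s : seq (nat * bool)) : bool :=
  all (fun i => (nth (0%N, false) s i).2 ==>
     all (fun j => (i < j)%N ==> ((nth (0%N, false) s j).1 != (nth (0%N, false) s i).1))
       (iota 0 (size s))) (iota 0 (size s)).

Lemma FPE s : FP s = FPs s.
Proof.
rewrite /FP /FPs -forall_iota; apply: eq_forallb => i; by rewrite -forall_iota.
Qed.

Lemma FP_cons x s : FP (x :: s) = (x.2 ==> all (fun y => y.1 != x.1) s) && FP s.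
Proof.
rewrite !FPE /FPs /= !(iotaDl 1 0) all_map.
congr andb.
- congr implb; rewrite -(all_nth_iota _ (0%N, false)).
  by apply: eq_all => j /=; rewrite add0n.
- rewrite all_map; apply: eq_all => i /=; rewrite /= all_map.
  by congr implb; apply: eq_all => j /=; rewrite ?add0n ltnS.
Qed.

Lemma is_ovpE s : is_overpartition s = ovp s.
Proof.
elim: s => [|x s IH] //=.
  by rewrite /is_overpartition /=; apply/forallP => -[].
move: IH; rewrite /is_overpartition -/(FP s) -/(FP (x :: s)) FP_cons => IH.
have gt : transitive geq by move=> a b c h1 h2; exact: leq_trans h2 h1.
rewrite /= (path_sortedE gt) all_map -IH.
case: (all (fun y : nat * bool => (y.1 <= x.1)%N) s);
case: (sorted _ _); case: (0 < x.1)%N; case: (all _ s); case: (_ ==> _); by case: (FP s).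
Qed.

From mathcomp Require Import zify.

Lemma mem_words (A : seq (nat * bool)) k s :
  (s \in words A k) = (size s == k) && all (mem A) s.
Proof.
elim: k s => [|k IH] s /=.
  by case: s.
apply/allpairsP/idP => [[[x w] [Hx Hw ->]]|].
  by move: Hw; rewrite /= IH eqSS => /andP [-> ->]; rewrite Hx.
case: s => [|x w] //= /andP [Hs /andP [Hx Hw]].
by exists (x, w); split => //=; rewrite IH -(eqSS (size w)) Hs.
Qed.

Definition good m b (s : seq (nat * bool)) :=
  [&& ovp s, (size s <= b)%N & all (fun y => y.1 <= m)%N s].

Lemma ovp_pos s : ovp s -> all (fun y => 0 < y.1)%N s.
Proof.
elim: s => [|x s IH] //= /and4P [H0 _ _ Hs]; by rewrite H0 IH.
Qed.

Lemma mem_ovp_box m b s : (s \in ovp_box m b) = good m b s.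
Proof.
rewrite /ovp_box mem_undup mem_filter is_ovpE /good.
case Hs: (ovp s); rewrite ?andTb //.
apply/flatten_mapP/andP => [[k Hk]|[H1 H2]].
  rewrite mem_words => /andP [/eqP Hsz Hall]; split.
    by move: Hk; rewrite mem_iota Hsz; lia.
  apply/allP => y /(allP Hall) /allpairsP [[p o] [Hp _ ->]] /=.
  by move: Hp; rewrite mem_iota /=; lia.
exists (size s); first by rewrite mem_iota add0n ltnS H1.
rewrite mem_words eqxx andTb; apply/allP => y Hy.
apply/allpairsP; exists (y.1, y.2); split => //=.
- rewrite mem_iota; have := allP (ovp_pos _ Hs) y Hy; have := allP H2 y Hy; rewrite /=; lia.
- by case: (y.2).
- by case: y Hy.
Qed.

Fixpoint ov (m : nat) : nat -> seq (seq (nat * bool)) :=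
  if m is m'.+1 then
    fix ovb b := if b is b'.+1 then
       ov m' b ++ [seq (m, false) :: s | s <- ovb b'] ++ [seq (m, true) :: s | s <- ov m' b']
       else [:: [::]]
  else fun _ => [:: [::]].

Lemma ovSS m b : ov m.+1 b.+1 =
  ov m b.+1 ++ [seq (m.+1, false) :: s | s <- ov m.+1 b] ++ [seq (m.+1, true) :: s | s <- ov m b].
Proof. by []. Qed.

Lemma mem_cons_map (a : nat * bool) L x s :
  (x :: s \in [seq a :: s | s <- L]) = (x == a) && (s \in L).
Proof.
apply/mapP/andP => [[s' Hs' [-> ->]]|[/eqP -> Hs]]; first by rewrite eqxx.
by exists s.
Qed.

Lemma all_le_split m (s : seq (nat * bool)) :
  all (fun y => y.1 <= m)%N s = all (fun y => y.1 <= m.+1)%N s && all (fun y => y.1 != m.+1) s.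
Proof.
rewrite -all_predI; apply: eq_all => y /=.
by rewrite andbC -ltn_neqAle ltnS.
Qed.

Lemma mem_ov m b s : (s \in ov m b) = good m b s.
Proof.
elim: m b s => [|m IHm] b s.
  by rewrite /= inE /good; case: s => [|[[|p] o] s] //=; rewrite ?andbF.
elim: b s => [|b IHb] s.
  by rewrite /= inE /good; case: s => [|x s] //=; rewrite andbF.
rewrite ovSS !mem_cat; case: s => [|[p o] s].
  by rewrite IHm /good.
rewrite IHm !mem_cons_map IHb IHm /good /=.
have [Hp|Hp|->] := ltngtP p m.+1.
- have Hpm : (p <= m)%N by rewrite -ltnS.
  rewrite Hpm !xpair_eqE (ltn_eqF Hp) /=.
  case Ha: (all (fun y => y.1 <= p)%N s); last by rewrite /= !andbF.
  have -> : all (fun y => y.1 <= m)%N s.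
    by apply: sub_all Ha => y /= Hy; apply: leq_trans Hy Hpm.
  have -> : all (fun y => y.1 <= m.+1)%N s.
    by apply: sub_all Ha => y /= Hy; apply: leq_trans Hy (ltnW Hp).
  by rewrite !orbF.
- rewrite !xpair_eqE (gtn_eqF Hp) /=.
  have -> : (p <= m)%N = false by rewrite leqNgt (ltn_trans (ltnSn m) Hp).
  by rewrite /= !andbF.
- rewrite ltnn /= !xpair_eqE eqxx /=.
  case: o => /=.
    rewrite (all_le_split m s) ltnS !andbF /=.
    by case: (ovp s); case: (size s <= b)%N; case: (all (fun y : nat * bool => (y.1 <= m.+1)%N) s); rewrite /= ?andbT ?andbF.
  rewrite ltnS !andbF /= orbF.
  by case: (ovp s); case: (size s <= b)%N; case: (all (fun y : nat * bool => (y.1 <= m.+1)%N) s).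
Qed.


Lemma ov_uniq m b : uniq (ov m b).
Proof.
elim: m b => [|m IHm] b; first by [].
elim: b => [|b IHb]; first by [].
have inj a : injective (fun s : seq (nat * bool) => a :: s) by move=> x y [].
rewrite ovSS !cat_uniq !map_inj_uniq // IHm IHb IHm ?andbT ?andTb.
apply/andP; split.
  apply/hasPn => s; rewrite mem_cat => /orP [] /mapP [s' _ ->];
  by rewrite mem_ov /good /= ltnn !andbF.
apply/hasPn => s /mapP [s' _ ->]; rewrite mem_cons_map.
by rewrite xpair_eqE eqxx.
Qed.

Definition wt (s : seq (nat * bool)) : R := t ^+ ovp_nover s * q ^+ ovp_weight s.
Definition F m b := \sum_(s <- ov m b) wt s.

Lemma F0 b : F 0 b = 1.
Proof. by rewrite /F /= big_seq1 /wt /= mulr1. Qed.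

Lemma Fm0 m : F m 0 = 1.
Proof. by case: m => [|m]; rewrite /F /= big_seq1 /wt /= mulr1. Qed.

Lemma FSS m b : F m.+1 b.+1 = F m b.+1 + q ^+ m.+1 * F m.+1 b + t * q ^+ m.+1 * F m b.
Proof.
rewrite /F ovSS !big_cat !big_map /= addrA; congr (_ + _ + _); rewrite big_distrr;
apply: eq_bigr => s _; rewrite /wt /ovp_nover /ovp_weight /= ?add0n !exprD ?expr1; ring.
Qed.

Lemma ovbin_F n k : (0 < n)%N -> ovbin (n + k - 1) k = F n.-1 k.
Proof.
move=> hn; rewrite /ovbin ifT; last by lia.
have -> : (n + k - 1 - k = n.-1)%N by lia.
rewrite /F /wt; apply: perm_big; apply: uniq_perm.
- exact: undup_uniq.
- exact: ov_uniq.
- by move=> s; rewrite mem_ovp_box mem_ov.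
Qed.
Definition eqN (N : nat) (A B : {poly R}) := forall j, (j <= N)%N -> A`_j = B`_j.

Lemma eqN_refl N A : eqN N A A. Proof. by []. Qed.
Lemma eqN_sym N A B : eqN N A B -> eqN N B A.
Proof. by move=> H j Hj; rewrite H. Qed.
Lemma eqN_trans N A B C : eqN N A B -> eqN N B C -> eqN N A C.
Proof. by move=> H1 H2 j Hj; rewrite H1 ?H2. Qed.
Lemma eqN_mull N C A B : eqN N A B -> eqN N (C * A) (C * B).
Proof.
move=> H j Hj; rewrite !coefM; apply: eq_bigr => i _; rewrite H //.
exact: leq_trans (leq_subr _ _) Hj.
Qed.
Lemma eqN_mulr N C A B : eqN N A B -> eqN N (A * C) (B * C).
Proof. by move=> H; rewrite ![_ * C]mulrC; apply: eqN_mull. Qed.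

Definition tr (f : fps) (N : nat) : {poly R} := \poly_(i < N.+1) f i.

Lemma tr_coef f N j : (j <= N)%N -> (tr f N)`_j = f j.
Proof. by move=> Hj; rewrite coef_poly ltnS Hj. Qed.

Lemma fps_mul_tr f g N k : (k <= N)%N -> fps_mul f g k = (tr f N * tr g N)`_k.
Proof.
move=> Hk; rewrite coefM /fps_mul; apply: eq_bigr => i _.
have Hi : (i <= N)%N by apply: leq_trans Hk; rewrite -ltnS.
rewrite !tr_coef //; exact: leq_trans (leq_subr _ _) Hk.
Qed.

Lemma eqN_tr_poly P N : eqN N (tr (fps_of_poly P) N) P.
Proof. by move=> j Hj; rewrite tr_coef. Qed.

Lemma inv_coefs_nth f m i : (i <= m)%N ->
  nth 0 (fps_inv_coefs f m) i = fps_inv f (m - i)%N.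
Proof.
elim: m i => [|m IH] [|i] //= Hi.
by rewrite IH // subSS.
Qed.

Lemma fps_inv0 f : f 0%N = 1 -> fps_inv f 0 = 1.
Proof. by move=> f0; rewrite /fps_inv /= f0 invr1. Qed.

Lemma fps_inv_S f m : f 0%N = 1 ->
  fps_inv f m.+1 = - \sum_(i < m.+1) f i.+1 * fps_inv f (m - i)%N.
Proof.
move=> f0; rewrite {1}/fps_inv /= f0 invr1 mulr1; congr (- _).
by apply: eq_bigr => i _; rewrite inv_coefs_nth // -ltnS.
Qed.

Lemma fps_inv_mul f m : f 0%N = 1 -> fps_mul f (fps_inv f) m = (m == 0)%:R.
Proof.
move=> f0; case: m => [|m]; rewrite /fps_mul.
  by rewrite big_ord1 f0 fps_inv0 // mulr1.
rewrite big_ord_recl /= subn0 f0 mul1r fps_inv_S //.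
rewrite addrC; apply/eqP; rewrite subr_eq0; apply/eqP.
by apply: eq_bigr => i _.
Qed.

Lemma qpoch0 c k : (qpoch c k)`_0 = 1.
Proof.
elim: k => [|k IH]; rewrite /qpoch ?big_ord0 ?coef1 //.
rewrite big_ord_recr coef0M /=; rewrite /qpoch in IH; rewrite IH mul1r.
by rewrite coefB coef1 coefZ coefX /= mulr0 subr0.
Qed.

Lemma factor_coef (c : R) (A : {poly R}) j :
  ((1 - c *: 'X) * A)`_j = A`_j - c * (if j == 0%N then 0 else A`_j.-1).
Proof. by rewrite mulrBl mul1r coefB -scalerAl coefZ coefXM. Qed.

Lemma inv_eqN (P : {poly R}) N : (P`_0 = 1) ->
  eqN N (P * tr (fps_inv (fps_of_poly P)) N) 1.
Proof.
move=> P0 j Hj.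
have := @fps_inv_mul (fps_of_poly P) j P0; rewrite (@fps_mul_tr _ _ N j Hj) coef1 => <-.
symmetry; exact: (@eqN_mulr _ _ _ _ (eqN_tr_poly P N)) j Hj.
Qed.

Definition G m : fps := fun j => F m j * q ^+ j.

Lemma G_rec m N :
  eqN N ((1 - (q * q ^+ m.+1) *: 'X) * tr (G m.+1) N)
        ((1 - (- (t * q ^+ 2) * q ^+ m) *: 'X) * tr (G m) N).
Proof.
move=> j Hj; rewrite !factor_coef; case: j Hj => [|j] Hj /=.
  by rewrite !tr_coef // /G !Fm0 !mulr0 !subr0.
rewrite !tr_coef ?(ltnW Hj) // /G FSS !exprS; ring.
Qed.

Lemma qpochS c k : qpoch c k.+1 = qpoch c k * (1 - (c * q ^+ k) *: 'X).
Proof. by rewrite /qpoch big_ord_recr. Qed.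

Lemma main_eq m N : eqN N (qpoch q m.+1 * tr (G m) N) (qpoch (- (t * q ^+ 2)) m).
Proof.
elim: m => [|m IH].
  rewrite /qpoch big_ord1 big_ord0 => j Hj; rewrite factor_coef coef1.
  case: j Hj => [|j] Hj /=; rewrite !tr_coef ?(ltnW Hj) // /G !F0.
    by rewrite expr0 mulr1 mulr0 subr0.
  rewrite !exprS; ring.
rewrite (qpochS q m.+1) (qpochS (- (t * q ^+ 2)) m).
apply: (@eqN_trans _ _ (qpoch q m.+1 * ((1 - (- (t * q ^+ 2) * q ^+ m) *: 'X) * tr (G m) N))).
  by rewrite -mulrA; exact: (@eqN_mull N _ _ _ (G_rec m N)).
rewrite mulrCA [qpoch _ m * _]mulrC; exact: (@eqN_mull N _ _ _ IH).
Qed.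

Theorem theorem1p1 (n : nat) (hn : (0 < n)%N) :
  (fun k : nat => ovbin (n + k - 1) k * q ^+ k)
  =1 fps_mul (fps_of_poly (qpoch (- (t * q ^+ 2)) n.-1))
             (fps_inv (fps_of_poly (qpoch q n))).
Proof.
move=> k /=; rewrite ovbin_F // (@fps_mul_tr _ _ k k (leqnn k)).
case: n hn => // m _ /=.
set Q := qpoch q m.+1; set P := qpoch (- (t * q ^+ 2)) m.
set I := fps_inv (fps_of_poly Q).
rewrite (@eqN_mulr _ _ _ _ (eqN_tr_poly P k) k (leqnn k)).
rewrite (@eqN_mulr _ _ _ _ (eqN_sym _ _ _ (main_eq m k)) k (leqnn k)).
rewrite -mulrA [tr (G m) k * _]mulrC mulrA.
rewrite (@eqN_mulr _ (tr (G m) k) _ _ (inv_eqN Q k (qpoch0 q m.+1)) k (leqnn k)).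
by rewrite mul1r tr_coef.
Qed.
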